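(* Let $k\ge 3$, $n_1=\cdots=n_k\ge 2$, $r\in[k]$, and let $G,G'\in\mathcal{O}(CS^r_{n_1,\dots,n_k})$. Suppose that $G$ and $G'$ belong to the same one of the following three classes: (Case 1) $G=\Gamma(\text{complete};\ t_i=\mathrm{ss}\text{ for }i\in I,\ t_i=\mathrm{sc}\text{ for }i\notin I)$ for some $I\subseteq[k]$; (Case 2) $G=\Gamma(\text{star toward }j;\ t_j=\mathrm{sc},\ t_i=\mathrm{ss}\text{ for }i\in I,\ t_i=\mathrm{c}\text{ for }i\notin I\cup\{j\})$ for some $j\in[k]$ and $I\subseteq[k]\setminus\{j\}$; (Case 3) the same as Case 2 but with $t_j=\mathrm{c}$; and similarly $G'$ with index set $I'$ (and possibly a different index $j'$). If $|I|=|I'|$, then $G$ and $G'$ are isomorphic.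
   Context: $V=U_1\sqcup\cdots\sqcup U_k$, $|U_i|=n_i$. The clique-star $CS^r_{n_1,\dots,n_k}$: each $U_i$ is a clique, every vertex of $U_r$ is adjacent to every vertex of each $U_i$, $i\ne r$, no edges between $U_i,U_l$ for distinct $i,l\ne r$. The local complement $c_v(G)$ complements the edges among the neighbours of $v$; $\mathcal{O}(G)$ is the set of graphs on $V$ obtainable from $G$ by finite sequences of local complements. Graph family $\Gamma$: each $i$ gets a type $t_i\in\{\mathrm{c},\mathrm{sc},\mathrm{ss}\}$: $\mathrm{c}$: $U_i$ a clique, $R_i=U_i$; $\mathrm{sc}$: $U_i$ independent, $R_i=U_i$; $\mathrm{ss}$: a center $c_i\in U_i$ adjacent to all other vertices of $U_i$, no other internal edges, $R_i=\{c_i\}$. Central type ''complete'': for all $i\ne l$, all edges between $R_i$ and $R_l$; ''star toward $j$'': for each $i\ne j$ all edges between $R_i$ and $R_j$, and no other edges between different parts. (Every graph in $\mathcal{O}(CS^r_{n_1,\dots,n_k})$ is of one of the three case forms.) *)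

(* Defs.v *)
From mathcomp Require Import all_boot all_fingroup.
Set Implicit Arguments. Unset Strict Implicit. Unset Printing Implicit Defensive.

(* Vertex set V = U_1 ⊔ ... ⊔ U_k with |U_i| = n : vertex (i, a) lies in U_i. *)
Definition vtx (k n : nat) := ('I_k * 'I_n)%type.

Definition graph (k n : nat) := {set vtx k n * vtx k n}.

Definition adj k n (G : graph k n) (x y : vtx k n) : bool := (x, y) \in G.

Definition clique_star k n (r : 'I_k) : graph k n :=
  [set p : vtx k n * vtx k n | (p.1 != p.2) &&
     [|| p.1.1 == p.2.1, p.1.1 == r | p.2.1 == r]].

Definition local_complement k n (v : vtx k n) (G : graph k n) : graph k n :=
  [set p : vtx k n * vtx k n |
     if [&& p.1 != p.2, adj G v p.1 & adj G v p.2] then p \notin G else p \in G].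

Inductive lc_orbit k n (G0 : graph k n) : graph k n -> Prop :=
  | lc_orbit_refl : lc_orbit G0 G0
  | lc_orbit_step v G : lc_orbit G0 G -> lc_orbit G0 (local_complement v G).

Definition isomorphic k n (G H : graph k n) : Prop :=
  exists f : {perm vtx k n}, forall x y, adj G x y = adj H (f x) (f y).

Inductive ptype := Tc | Tsc | Tss.
Definition ptype_eqb (a b : ptype) : bool :=
  match a, b with Tc, Tc | Tsc, Tsc | Tss, Tss => true | _, _ => false end.

Inductive ctype (k : nat) := Complete | StarToward of 'I_k.

Definition inR k n (t : 'I_k -> ptype) (c : 'I_k -> 'I_n) (x : vtx k n) : bool :=
  if ptype_eqb (t x.1) Tss then x.2 == c x.1 else true.

Definition Gamma k n (ct : ctype k) (t : 'I_k -> ptype) (c : 'I_k -> 'I_n)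
  : graph k n :=
  [set p : vtx k n * vtx k n |
     let x := p.1 in let y := p.2 in
     if x.1 == y.1 then
       (x != y) &&
       match t x.1 with
       | Tc => true
       | Tsc => false
       | Tss => (x.2 == c x.1) || (y.2 == c x.1)
       end
     else
       [&& inR t c x, inR t c y &
           match ct with
           | Complete => true
           | StarToward j => (x.1 == j) || (y.1 == j)
           end]].

Definition case1 k n (G : graph k n) (I : {set 'I_k}) : Prop :=
  exists c : 'I_k -> 'I_n,
    G = Gamma (Complete k) (fun i => if i \in I then Tss else Tsc) c.

Definition case23 k n (tj : ptype) (G : graph k n) (I : {set 'I_k}) : Prop :=
  exists (j : 'I_k) (c : 'I_k -> 'I_n), j \notin I /\
    G = Gamma (StarToward j)
          (fun i => if i == j then tj else if i \in I then Tss else Tc) c.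

Definition case2 k n (G : graph k n) (I : {set 'I_k}) := case23 Tsc G I.
Definition case3 k n (G : graph k n) (I : {set 'I_k}) := case23 Tc G I.

(* Main.v *)
Require Import Defs.
From mathcomp Require Import all_boot all_fingroup.
Set Implicit Arguments. Unset Strict Implicit. Unset Printing Implicit Defensive.

Lemma ex_perm_set (T : finType) (A B : {set T}) : #|A| = #|B| ->
  exists s : {perm T}, forall x, (s x \in B) = (x \in A).
Proof.
move=> hc.
have [m] := ubnP #|A :\: B|; elim: m A hc => // m IH A hc hm.
have [/eqP e|[x xA]] := set_0Vmem (A :\: B).
  have sAB : A \subset B by rewrite -setD_eq0 e.
  have eAB : A = B by apply/eqP; rewrite eqEcard sAB hc leqnn.
  by exists 1%g => z; rewrite perm1 eAB.
have hBA : #|B :\: A| = #|A :\: B|.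
  by rewrite !cardsD hc setIC.
have [y yB] : exists y, y \in B :\: A.
  apply/set0Pn; rewrite -card_gt0 hBA; apply/card_gt0P; by exists x.
move: xA yB; rewrite !inE => /andP[xnB xA] /andP[ynA yB].
pose t := tperm x y.
pose A' := t @^-1: A.
have cA' : #|A'| = #|B| by rewrite card_preimset ?hc //; exact: perm_inj.
have eD : A' :\: B = (A :\: B) :\ x.
  apply/setP=> z; rewrite !inE /t; case: tpermP => [->|->|/eqP/negPf-> _].
  - by rewrite eqxx (negPf ynA) andbF.
  - by rewrite yB andbF.
  - by [].
have hlt : #|A' :\: B| < m.
  rewrite eD; rewrite ltnS in hm; apply: leq_trans _ hm; apply: proper_card; apply/properP; split.
    exact: subD1set.
  by exists x; rewrite ?inE ?eqxx // xnB xA.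
have [s hs] := IH A' cA' hlt.
exists (t * s)%g => z; rewrite permM hs /A' inE /t tpermK //.
Qed.

Lemma ex_perm_set2 (T : finType) (A B : {set T}) a b : #|A| = #|B| ->
  a \notin A -> b \notin B ->
  exists s : {perm T}, s a = b /\ forall x, (s x \in B) = (x \in A).
Proof.
move=> hc aA bB; have [s0 hs0] := ex_perm_set hc.
exists (s0 * tperm (s0 a) b)%g; split; first by rewrite permM tpermL.
move=> x; rewrite permM -hs0; case: tpermP => [->|->|//].
  by rewrite hs0 (negPf aA) (negPf bB).
by rewrite hs0 (negPf aA) (negPf bB).
Qed.

Lemma tperm_eqL (T : finType) (x y a : T) : (tperm x y a == y) = (a == x).
Proof.
apply/eqP/eqP => [h|->]; last exact: tpermL.
by apply: (@perm_inj _ (tperm x y)); rewrite h tpermL.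
Qed.

Definition ctpred k (ct : ctype k) (i l : 'I_k) : bool :=
  match ct with Complete => true | StarToward j => (i == j) || (l == j) end.

Lemma gamma_iso k n (ct ct' : ctype k) t t' (c c' : 'I_k -> 'I_n) (s : {perm 'I_k}) :
  (forall i, t' (s i) = t i) -> (forall i l, ctpred ct' (s i) (s l) = ctpred ct i l) ->
  isomorphic (Gamma ct t c) (Gamma ct' t' c').
Proof.
move=> ht hct.
pose tau i := tperm (c i) (c' (s i)).
pose f (x : vtx k n) : vtx k n := (s x.1, tau x.1 x.2).
have finj : injective f.
  move=> [i a] [l b] [] /perm_inj ei; rewrite /= -ei => /perm_inj -> ; by rewrite ei.
have tc : forall i, c' (s i) = tau i (c i) by move=> i; rewrite /tau tpermL.
exists (perm finj) => [[i a] [l b]]; rewrite /adj !permE !inE /f /=.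
have hR : forall i a, inR t' c' (s i, tau i a) = inR t c (i, a).
  move=> i0 a0; rewrite /inR /= ht; case: (t i0) => //=.
  exact: tperm_eqL.
rewrite (inj_eq (@perm_inj _ _)).
case: eqP => [<-|_].
  rewrite !xpair_eqE eqxx /= ht.
  have -> : (tau i a == tau i b) = (a == b) by exact: (inj_eq (@perm_inj _ _)).
  have -> : (s i == s i) = true by exact: eqxx.
  case: (t i) => //=.
  by congr (_ && (_ || _)); symmetry; exact: tperm_eqL.
rewrite !hR; congr [&& _, _ & _].
by have := hct i l; rewrite /ctpred; case: ct hct; case: ct'.
Qed.

Theorem lemma8 (k n : nat) (r : 'I_k) (G G' : graph k n)
  (I I' : {set 'I_k}) :
  3 <= k -> 2 <= n ->
  lc_orbit (clique_star n r) G -> lc_orbit (clique_star n r) G' ->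
  (case1 G I /\ case1 G' I') \/ (case2 G I /\ case2 G' I') \/
  (case3 G I /\ case3 G' I') ->
  #|I| = #|I'| ->
  isomorphic G G'.
Proof.
move=> _ _ _ _ H hc.
have H23 : forall tj, case23 tj G I -> case23 tj G' I' -> isomorphic G G'.
  move=> tj [j [c [jI ->]]] [j' [c' [jI' ->]]].
  have [s [sj hs]] := ex_perm_set2 hc jI jI'.
  apply: (@gamma_iso _ _ _ _ _ _ _ _ s) => [i|i l] /=.
    by rewrite -sj (inj_eq (@perm_inj _ _)) hs.
  by rewrite -sj !(inj_eq (@perm_inj _ _)).
case: H => [[[c ->] [c' ->]]|[[h1 h2]|[h1 h2]]]; last 2 first.
- exact: H23 h1 h2.
- exact: H23 h1 h2.
have [s hs] := ex_perm_set hc.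
by apply: (@gamma_iso _ _ _ _ _ _ _ _ s) => [i|i l] //=; rewrite hs.
Qed.
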